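(* Identify $\mathcal M_d(\mathbb C)\otimes\mathcal M_m(\mathbb C)$ with $\mathcal M_{dm}(\mathbb C)$ via $A\otimes B\mapsto(b_{ij}A)_{i,j=1}^m$, and define the partial trace $\mathrm{Tr}_m:\mathcal M_{dm}(\mathbb C)\to\mathcal M_d(\mathbb C)$ by $\mathrm{Tr}_m(C)=\sum_{i=1}^m C_{ii}$, where $C=(C_{ij})_{i,j=1}^m$ with $C_{ij}\in\mathcal M_d(\mathbb C)$. (1) If $S\in\mathcal M_{dm}(\mathbb C)$ is Hermitian, there exists $D_S(d,m)\subseteq\mathbb R^d$ such that $\mathrm{Tr}_m(\mathcal U_{dm}(S))=\{A\in\mathcal M_d(\mathbb C)\text{ Hermitian}:\lambda(A)\in D_S(d,m)\}$. (2) If $S\in\mathcal M_{dm}(\mathbb C)$ is positive semidefinite, there exists $D^w_S(d,m)\subseteq(\mathbb R_{\ge0})^d$ such that $\mathrm{Tr}_m(\mathcal C_{dm}(S))=\{A\in\mathcal M_d(\mathbb C)\text{ positive semidefinite}:\lambda(A)\in D^w_S(d,m)\}$.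
   Context: $\mathcal U_{k}(S)=\{U^*SU:U\in\mathcal M_k(\mathbb C)\text{ unitary}\}$, $\mathcal C_k(S)=\{V^*SV:V\in\mathcal M_k(\mathbb C),\|V\|\le1\}$, and $\mathrm{Tr}_m(\mathcal X)=\{\mathrm{Tr}_m(x):x\in\mathcal X\}$. $\lambda(A)$ is the vector of eigenvalues of Hermitian $A$ in non-increasing order with multiplicity. *)

(* Defs.v *)
From HB Require Import structures.
From mathcomp Require Import all_boot all_order all_algebra.
From mathcomp Require Import sesquilinear spectral.
From mathcomp.real_closed Require Import complex.

Set Implicit Arguments.
Unset Strict Implicit.
Unset Printing Implicit Defensive.

Import Order.TTheory GRing.Theory Num.Theory.
Local Open Scope ring_scope.
Local Open Scope complex_scope.
Local Open Scope sesquilinear_scope.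

(* Complex numbers: R[i] for a real closed field R (R = the reals gives C). *)

(* Block index: block i : 'I_m, inner index p : 'I_d  |->  i*d + p in 'I_(d*m).
   This realises the identification A (x) B |-> (b_ij A)_{i,j}. *)
Definition bidx (d m : nat) (i : 'I_m) (p : 'I_d) : 'I_(d * m) :=
  cast_ord (mulnC m d) (mxvec_index i p).

Definition ptrace (R : rcfType) (d m : nat) (C : 'M[R[i]]_(d * m)) : 'M[R[i]]_d :=
  \matrix_(p < d, q < d) \sum_(k < m) C (bidx k p) (bidx k q).

Definition is_hermitian (R : rcfType) (n : nat) (A : 'M[R[i]]_n) : Prop :=
  A \is hermsymmx.

Definition psd (R : rcfType) (n : nat) (A : 'M[R[i]]_n) : Prop :=
  A \is hermsymmx /\ forall x : 'cV[R[i]]_n, 0 <= (x ^t* *m A *m x) 0 0.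

Definition unitary (R : rcfType) (n : nat) (U : 'M[R[i]]_n) : Prop :=
  U \is unitarymx.

Definition contraction (R : rcfType) (n : nat) (V : 'M[R[i]]_n) : Prop :=
  forall x : 'cV[R[i]]_n,
    (((V *m x) ^t* *m (V *m x)) 0 0) <= ((x ^t* *m x) 0 0).

(* lam_is A l : l = lambda(A), the vector of eigenvalues of A (roots of the
   characteristic polynomial, with multiplicity) listed in non-increasing order. *)
Definition lam_is (R : rcfType) (n : nat) (A : 'M[R[i]]_n) (l : 'rV[R]_n) : Prop :=
  char_poly A = \prod_(k < n) ('X - ((l 0 k)%:C)%:P) /\
  forall j k : 'I_n, (j <= k)%N -> l 0 k <= l 0 j.

Definition TrU (R : rcfType) (d m : nat) (S : 'M[R[i]]_(d * m)) (A : 'M[R[i]]_d) : Prop :=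
  exists U : 'M[R[i]]_(d * m), unitary U /\ A = ptrace (U ^t* *m S *m U).

Definition TrC (R : rcfType) (d m : nat) (S : 'M[R[i]]_(d * m)) (A : 'M[R[i]]_d) : Prop :=
  exists V : 'M[R[i]]_(d * m), contraction V /\ A = ptrace (V ^t* *m S *m V).

(* Main.v *)
Require Import Defs.
From HB Require Import structures.
From mathcomp Require Import all_boot all_order all_algebra.
From mathcomp Require Import sesquilinear spectral fingroup perm.
From mathcomp.real_closed Require Import complex.
Set Implicit Arguments. Unset Strict Implicit. Unset Printing Implicit Defensive.
Import Order.TTheory GRing.Theory Num.Theory.
Local Open Scope ring_scope.

Section S.
Local Open Scope sesquilinear_scope.
Variable R : rcfType.
Local Notation C := (R[i]).

Lemma bidx_inj d m (k : 'I_m) (p : 'I_d) k' p' : bidx k p = bidx k' p' -> k = k' /\ p = p'.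
Proof. by move=> /cast_ord_inj /cast_ord_inj /enum_rank_inj [-> ->]. Qed.

Lemma bidx_surj d m (a : 'I_(d * m)) : exists k p, a = bidx k p.
Proof.
rewrite -[a](cast_ordKV (mulnC m d)).
by case/mxvec_indexP: (cast_ord _ a) => k p; exists k, p.
Qed.

Lemma bidx_eq d m (k : 'I_m) (p : 'I_d) k' p' : (bidx k p == bidx k' p') = (k == k') && (p == p').
Proof.
apply/eqP/andP => [/bidx_inj [-> ->] | [/eqP-> /eqP->]] //.
Qed.

Definition Kb d m (k : 'I_m) : 'M[C]_(d * m, d) := \matrix_(a, p) (a == bidx k p)%:R.
Arguments Kb d {m} k.

Lemma sum_delta n (c : 'I_n) (f : 'I_n -> C) : \sum_a (a == c)%:R * f a = f c.
Proof.
rewrite (bigD1 c) //= eqxx mul1r big1 ?addr0 // => a /negPf ->; by rewrite mul0r.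
Qed.

Lemma ptraceE d m (A : 'M[C]_(d * m)) : ptrace A = \sum_k (Kb d k)^t* *m A *m Kb d k.
Proof.
apply/matrixP => p q; rewrite !mxE summxE; apply: eq_bigr => k _.
rewrite mxE (eq_bigr (fun b => (b == bidx k q)%:R * ((Kb d k)^t* *m A) p b)); last first.
  by move=> b _; rewrite [Kb d k b q]mxE mulrC.
rewrite sum_delta mxE (eq_bigr (fun a => (a == bidx k p)%:R * A a (bidx k q))).
  by rewrite sum_delta.
by move=> a _; rewrite !mxE rmorph_nat.
Qed.

Lemma KtK d m (k j : 'I_m) : (Kb d k)^t* *m Kb d j = (k == j)%:R *: 1%:M.
Proof.
apply/matrixP => p q; rewrite !mxE.
rewrite (eq_bigr (fun a => (a == bidx k p)%:R * (a == bidx j q)%:R)); last first.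
  by move=> a _; rewrite !mxE rmorph_nat.
rewrite sum_delta bidx_eq; case: (k == j); case: (p == q); by rewrite ?mulr1 ?mulr0.
Qed.

Lemma sumKKt d m : \sum_(k < m) Kb d k *m (Kb d k)^t* = 1%:M.
Proof.
apply/matrixP => a b; rewrite summxE.
have [k0 [p0 ->]] := bidx_surj a.
rewrite (bigD1 k0) //= big1 ?addr0; last first.
  move=> k nk; rewrite !mxE big1 // => p _; rewrite !mxE bidx_eq eq_sym (negPf nk) /=.
  by rewrite mul0r.
rewrite !mxE (bigD1 p0) //= big1 ?addr0; last first.
  by move=> p np; rewrite !mxE bidx_eq eqxx eq_sym (negPf np) mul0r.
rewrite !mxE eqxx mul1r rmorph_nat.
have [b' [q' ->]] := bidx_surj b.
by rewrite !bidx_eq [_ == k0]eq_sym [_ == p0]eq_sym.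
Qed.


Lemma trCmul m n p (A : 'M[C]_(m, n)) (B : 'M[C]_(n, p)) : (A *m B)^t* = B^t* *m A^t*.
Proof. by rewrite trmx_mul map_mxM. Qed.

Definition liftW d m (W : 'M[C]_d) : 'M[C]_(d * m) := \sum_(k < m) Kb d k *m W *m (Kb d k)^t*.

Lemma liftK d m (W : 'M[C]_d) (j : 'I_m) : liftW m W *m Kb d j = Kb d j *m W.
Proof.
rewrite /liftW mulmx_suml (bigD1 j) //= big1 ?addr0.
  by rewrite -mulmxA KtK eqxx scale1r mulmx1.
by move=> k nk; rewrite -mulmxA KtK (negPf nk) scale0r mulmx0.
Qed.

Lemma Klift d m (W : 'M[C]_d) (j : 'I_m) : (Kb d j)^t* *m liftW m W = W *m (Kb d j)^t*.
Proof.
rewrite /liftW mulmx_sumr (bigD1 j) //= big1 ?addr0.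
  by rewrite !mulmxA KtK eqxx scale1r mul1mx.
by move=> k nk; rewrite !mulmxA KtK eq_sym (negPf nk) scale0r !mul0mx.
Qed.

Lemma liftC d m (W : 'M[C]_d) : (liftW m W)^t* = liftW m (W^t*).
Proof.
rewrite /liftW /= raddf_sum /= raddf_sum; apply: eq_bigr => k _.
rewrite -[LHS]/((Kb d k *m W *m (Kb d k)^t*)^t*). by rewrite !trCmul trmxCK mulmxA. Qed.

Lemma ptrace_lift d m (W : 'M[C]_d) (A : 'M[C]_(d * m)) :
  ptrace ((liftW m W)^t* *m A *m liftW m W) = W^t* *m ptrace A *m W.
Proof.
rewrite !ptraceE mulmx_sumr mulmx_suml; apply: eq_bigr => k _.
rewrite liftC -!mulmxA liftK.
by rewrite mulmxA Klift -mulmxA.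
Qed.

Lemma lift_unitary d m (W : 'M[C]_d) : W \is unitarymx -> liftW m W \is unitarymx.
Proof.
move=> /unitarymxP WW; apply/unitarymxP.
rewrite liftC {1}/liftW mulmx_suml -(sumKKt d m); apply: eq_bigr => k _.
by rewrite -!mulmxA Klift !mulmxA -(mulmxA _ W) WW mulmx1. Qed.


Lemma hermP n (A : 'M[C]_n) : (A \is hermsymmx) <-> A^t* = A.
Proof.
rewrite qualifE /= expr0 scale1r; split=> [/eqP h | h]; first by rewrite {2}h.
by rewrite h.
Qed.

Lemma trC_sum m n I (r : seq I) (F : I -> 'M[C]_(m, n)) :
  (\sum_(i <- r) F i)^t* = \sum_(i <- r) (F i)^t*.
Proof.
elim: r => [|a r IH]; first by rewrite !big_nil trmx0 map_mx0.
by rewrite !big_cons -IH linearD /= map_mxD.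
Qed.

Lemma herm_conj m n (A : 'M[C]_m) (V : 'M[C]_(m, n)) :
  A \is hermsymmx -> (V^t* *m A *m V) \is hermsymmx.
Proof. by move=> /hermP h; apply/hermP; rewrite !trCmul trmxCK h mulmxA. Qed.

Lemma psd_conj m n (A : 'M[C]_m) (V : 'M[C]_(m, n)) :
  psd A -> psd (V^t* *m A *m V).
Proof.
move=> [h p]; split; first exact: herm_conj.
move=> x; have := p (V *m x); by rewrite trCmul !mulmxA.
Qed.

Lemma herm_sum n I (r : seq I) (F : I -> 'M[C]_n) :
  (forall i, F i \is hermsymmx) -> (\sum_(i <- r) F i) \is hermsymmx.
Proof.
move=> h; apply/hermP; rewrite trC_sum; apply: eq_bigr => i _.
by apply/hermP.
Qed.

Lemma herm_ptrace d m (A : 'M[C]_(d * m)) : A \is hermsymmx -> ptrace A \is hermsymmx.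
Proof. by move=> h; rewrite ptraceE; apply: herm_sum => k; apply: herm_conj. Qed.

Lemma psd_ptrace d m (A : 'M[C]_(d * m)) : psd A -> psd (ptrace A).
Proof.
move=> [h p]; split; first exact: herm_ptrace.
move=> x; rewrite ptraceE mulmx_sumr mulmx_suml summxE; apply: sumr_ge0 => k _.
by have := p (Kb d k *m x); rewrite trCmul !mulmxA.
Qed.

End S.

Section S2.
Local Open Scope sesquilinear_scope.
Local Open Scope complex_scope.
Variable R : rcfType.
Local Notation C := (R[i]).

Lemma char_poly_conj n (P D : 'M[C]_n) : P \in unitmx ->
  char_poly (invmx P *m D *m P) = char_poly D.
Proof.
move=> Pu; rewrite /char_poly /char_poly_mx.
have -> : 'X%:M - map_mx polyC (invmx P *m D *m P) =
   map_mx polyC (invmx P) *m ('X%:M - map_mx polyC D) *m map_mx polyC P.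
  rewrite mulmxBr mulmxBl !map_mxM; congr (_ - _).
  by rewrite mul_mx_scalar -scalemxAl -map_mxM mulVmx // map_mx1 scalemx1.
rewrite !det_mulmx mulrC mulrA -det_mulmx -map_mxM mulmxV // map_mx1 det1.
by rewrite mul1r.
Qed.

Lemma char_poly_diag n (s : 'rV[C]_n) :
  char_poly (diag_mx s) = \prod_(i < n) ('X - (s 0 i)%:P).
Proof.
rewrite char_poly_trig ?diag_mx_is_trig //; apply: eq_bigr => i _.
by rewrite mxE eqxx mulr1n.
Qed.

Lemma real_C (x : C) : x \is Num.real -> x = (complex.Re x)%:C.
Proof. by case: x => a b; rewrite complex_real => /eqP ->. Qed.

Lemma herm_spec n (A : 'M[C]_n) : A \is hermsymmx ->
  exists P : 'M[C]_n, exists s : 'rV[R]_n, P \is unitarymx /\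
    A = P^t* *m diag_mx (map_mx (real_complex R) s) *m P.
Proof.
move=> h; exists (spectralmx A), (map_mx (@complex.Re R) (spectral_diag A)).
split; first exact: spectral_unitarymx.
rewrite -invmx_unitary ?spectral_unitarymx //.
have -> : map_mx (real_complex R) (map_mx (@complex.Re R) (spectral_diag A)) = spectral_diag A.
  apply/matrixP => i j; rewrite !mxE -real_C //.
  by have /mxOverP := hermitian_spectral_diag_real h; apply.
by apply/orthomx_spectralP/hermitian_normalmx.
Qed.


Lemma herm_lam n (A : 'M[C]_n) : A \is hermsymmx -> exists l, lam_is A l.
Proof.
move=> h; have [P [s [Pu ->]]] := herm_spec h.
pose leT := fun x y : R => y <= x.
pose r := [seq s 0 i | i <- enum 'I_n].
pose t := sort leT r.
have pt : perm_eq t r by rewrite perm_sort.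
have st : size t = n by rewrite size_sort size_map size_enum_ord.
exists (\row_k t`_k); split.
  rewrite -invmx_unitary // char_poly_conj ?unitarymx_unit // char_poly_diag.
  rewrite [RHS](eq_bigr (fun k : 'I_n => 'X - ((t`_k)%:C)%:P)); last by move=> k _; rewrite mxE.
  have -> : \prod_(k < n) ('X - ((t`_k)%:C)%:P) = \prod_(x <- t) ('X - (x%:C)%:P).
    by rewrite (big_nth 0) st big_mkord.
  rewrite (perm_big _ pt) big_map big_enum /=.
  by apply: eq_bigr => i _; rewrite mxE.
move=> j k jk; rewrite !mxE.
have tot : total leT by move=> x y; rewrite /leT le_total.
have tr : transitive leT by move=> x y z h1 h2; rewrite /leT (le_trans h2 h1).
have rf : reflexive leT by move=> x; rewrite /leT lexx.
apply: (sorted_leq_nth tr rf 0 (sort_sorted tot r)) => //; rewrite inE st //.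
Qed.


Lemma perm_mxE n (p : 'S_n) i j : (perm_mx p : 'M[C]_n) i j = (p i == j)%:R.
Proof. by rewrite /perm_mx !mxE. Qed.

Lemma perm_unitary n (p : 'S_n) : (perm_mx p : 'M[C]_n)^T \is unitarymx.
Proof.
apply/unitarymxP; rewrite trmxK map_perm_mx tr_perm_mx -perm_mxM mulVg.
by rewrite perm_mx1.
Qed.

Lemma diag_perm n (p : 'S_n) (a b : 'rV[C]_n) : (forall i, b 0 i = a 0 (p i)) ->
  diag_mx b = perm_mx p *m diag_mx a *m (perm_mx p)^T.
Proof.
move=> hb; apply/matrixP => i j; rewrite !mxE.
rewrite (eq_bigr (fun k => (k == p j)%:R * (perm_mx p *m diag_mx a) i k)); last first.
  by move=> k _; rewrite [(perm_mx p)^T k j]mxE perm_mxE eq_sym mulrC.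
rewrite sum_delta mxE.
rewrite (eq_bigr (fun k => (k == p i)%:R * diag_mx a k (p j))); last first.
  by move=> k _; rewrite perm_mxE eq_sym.
by rewrite sum_delta !mxE hb (inj_eq perm_inj).
Qed.

Lemma herm_lam_diag n (A : 'M[C]_n) (l : 'rV[R]_n) : A \is hermsymmx -> lam_is A l ->
  exists W : 'M[C]_n, W \is unitarymx /\ A = W^t* *m diag_mx (map_mx (real_complex R) l) *m W.
Proof.
move=> h [cp _]; have [P [s [Pu eA]]] := herm_spec h.
pose sC := map_mx (real_complex R) s.
pose lC := map_mx (real_complex R) l.
have e1 : \prod_(x <- [tuple sC 0 i | i < n]) ('X - x%:P) =
          \prod_(x <- [tuple lC 0 i | i < n]) ('X - x%:P).
  rewrite !big_tuple.
  rewrite (eq_bigr (fun i => 'X - (sC 0 i)%:P)); last by move=> i _; rewrite tnth_mktuple.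
  rewrite [RHS](eq_bigr (fun i => 'X - (lC 0 i)%:P)); last by move=> i _; rewrite tnth_mktuple.
  rewrite -char_poly_diag -(char_poly_conj _ (unitarymx_unit Pu)) invmx_unitary // -eA cp.
  by apply: eq_bigr => i _; rewrite mxE.
have /tuple_permP [p hp] := prod_XsubC_eq e1.
have hb : forall i, sC 0 i = lC 0 (p i).
  move=> i; have /val_inj := hp => /(congr1 (fun t => tnth t i)).
  by rewrite !tnth_mktuple.
exists ((perm_mx p)^T *m P); split; first exact: mul_unitarymx (perm_unitary p) Pu.
by rewrite eA (diag_perm hb) trCmul trmxK map_perm_mx !mulmxA.
Qed.


Lemma unitary_tK n (U : 'M[C]_n) : U \is unitarymx -> U^t* *m U = 1%:M.
Proof. by move=> Uu; rewrite -[U^t*]mul1mx mulmxKtV. Qed.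

Lemma unit_similar n (A B : 'M[C]_n) (l : 'rV[R]_n) :
  A \is hermsymmx -> B \is hermsymmx -> lam_is A l -> lam_is B l ->
  exists W : 'M[C]_n, W \is unitarymx /\ A = W^t* *m B *m W.
Proof.
move=> hA hB lA lB.
have [Wa [Wau eA]] := herm_lam_diag hA lA.
have [Wb [Wbu eB]] := herm_lam_diag hB lB.
exists (Wb^t* *m Wa); split.
  by apply: mul_unitarymx => //; rewrite trmxC_unitary.
rewrite eA eB trCmul trmxCK !mulmxA.
by rewrite !mulmxtVK.
Qed.

Lemma psd_lam n (A : 'M[C]_n) (l : 'rV[R]_n) : psd A -> lam_is A l ->
  forall k, 0 <= l 0 k.
Proof.
move=> [h p] lA k.
have [W [Wu eA]] := herm_lam_diag h lA.
have := p (W^t* *m delta_mx k (0 : 'I_1)).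
rewrite eA trCmul trmxCK !mulmxA !mulmxtVK //.
have -> : ((delta_mx k (0 : 'I_1))^t* *m diag_mx (map_mx (real_complex R) l) *m delta_mx k (0 : 'I_1)) 0 0
   = (l 0 k)%:C.
  rewrite !mxE (bigD1 k) //= big1 ?addr0.
    rewrite !mxE (bigD1 k) //= big1 ?addr0.
      by rewrite !mxE !eqxx /= rmorph1 mul1r mulr1n mulr1.
    by move=> j nj; rewrite !mxE (negPf nj) /= mulr0n mulr0.
  by move=> j nj; rewrite [delta_mx k _ j _]mxE (negPf nj) /= mulr0.
by rewrite ler0c.
Qed.

Lemma contraction_mul n (V L : 'M[C]_n) : contraction V -> L \is unitarymx ->
  contraction (V *m L).
Proof.
move=> cV Lu x; have := cV (L *m x).
have e : (L *m x)^t* *m (L *m x) = x^t* *m x.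
  by rewrite trCmul -(mulmxA _ (L^t*)) (mulmxA (L^t*)) unitary_tK // mul1mx.
by rewrite e !mulmxA.
Qed.

End S2.

Theorem theorem3p6 (R : rcfType) (d m : nat) :
  (forall S : 'M[R[i]]_(d * m), is_hermitian S ->
     exists D : 'rV[R]_d -> Prop,
       forall A : 'M[R[i]]_d,
         TrU S A <-> (is_hermitian A /\ exists l, lam_is A l /\ D l))
  /\
  (forall S : 'M[R[i]]_(d * m), psd S ->
     exists D : 'rV[R]_d -> Prop,
       (forall l, D l -> forall k : 'I_d, 0 <= l 0 k) /\
       forall A : 'M[R[i]]_d,
         TrC S A <-> (psd A /\ exists l, lam_is A l /\ D l)).
Proof.
split.
  move=> S hS; exists (fun l => exists B, TrU S B /\ lam_is B l) => A; split.
    move=> [U [Uu eA]].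
    have hA : is_hermitian A by rewrite /is_hermitian eA; apply/herm_ptrace/herm_conj.
    have [l lA] := herm_lam hA.
    by split=> //; exists l; split=> //; exists A; split=> //; exists U.
  move=> [hA [l [lA [B [[U [Uu eB]] lB]]]]].
  have hB : is_hermitian B by rewrite /is_hermitian eB; apply/herm_ptrace/herm_conj.
  have [W [Wu eAW]] := unit_similar hA hB lA lB.
  exists (U *m liftW m W); split; first by apply: mul_unitarymx => //; apply: lift_unitary.
  by rewrite eAW eB -ptrace_lift trCmul !mulmxA.
move=> S pS; exists (fun l => exists B, TrC S B /\ lam_is B l); split.
  move=> l [B [[V [_ eB]] lB]]; apply: (psd_lam _ lB).
  by rewrite eB; apply/psd_ptrace/psd_conj.
move=> A; split.
  move=> [V [cV eA]].
  have pA : psd A by rewrite eA; apply/psd_ptrace/psd_conj.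
  have [l lA] := herm_lam pA.1.
  by split=> //; exists l; split=> //; exists A; split=> //; exists V.
move=> [pA [l [lA [B [[V [cV eB]] lB]]]]].
have pB : psd B by rewrite eB; apply/psd_ptrace/psd_conj.
have [W [Wu eAW]] := unit_similar pA.1 pB.1 lA lB.
exists (V *m liftW m W); split; first by apply: contraction_mul => //; apply: lift_unitary.
by rewrite eAW eB -ptrace_lift trCmul !mulmxA.
Qed.
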